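(* Let $p$ be an odd prime, $q\geq1$, and let $L=L(x,dx)$ be the free differential graded Lie algebra over $\mathbb{Z}/p$ on generators $x$ of degree $q+1$ and $y=dx$ of degree $q$. Suppose $L=H\oplus K$ where $K$ is a differential submodule (acyclic) with a basis $\{x_\alpha,y_\alpha,z_\beta,w_\beta\}_{\alpha\in\mathscr I,\beta\in\mathscr J}$ of homogeneous elements with $d x_\alpha=y_\alpha$, $\deg x_\alpha$ even, $dz_\beta=w_\beta$, $\deg z_\beta$ odd. Let $\sigma\subset L$ be the subspace spanned by $\{\sigma_k(x_\alpha):\alpha\in\mathscr I,k\geq1\}$ and $\sigma_N$ its degree-$N$ part. Then for every positive integer $N$, $$\dim_{\mathbb{Z}/p}\sigma_N\leq c_1\,N\,\varphi^{N/p},\qquad c_1=2(q+2)\varphi^{2/p},$$ where $\varphi$ is the unique positive real root of $z^{q+1}-z-1$.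
   Context: For an even-degree element $u$ of a differential graded Lie algebra over $\mathbb{Z}/p$ ($p$ odd), with $\mathrm{ad}(u)(v)=[u,v]$, define $$\tau_k(u)=\mathrm{ad}^{p^k-1}(u)(du),\qquad \sigma_k(u)=\frac12\sum_{j=1}^{p^k-1}\frac1p\binom{p^k}{j}\big[\mathrm{ad}^{j-1}(u)(du),\ \mathrm{ad}^{p^k-1-j}(u)(du)\big].$$ Note $\deg\sigma_k(u)=p^k\deg u-2$. *)

(* Defs.v *)
From mathcomp Require Import all_boot all_order all_algebra.
From mathcomp Require Import reals exp.
Set Implicit Arguments. Unset Strict Implicit. Unset Printing Implicit Defensive.
Import Order.TTheory GRing.Theory Num.Theory.
Local Open Scope ring_scope.

(* The tensor algebra T(x, y) over Z/p on two generators, realised as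
   functions from words to 'F_p (a word is a seq bool: true = x, false = y).
   Elements of the free Lie algebra L(x,dx) are finite sums of homogeneous
   elements and hence finitely supported. *)
Definition word := seq bool.
Definition T (p : nat) := word -> 'F_p.

Definition wdeg (q : nat) (w : word) : nat :=
  (\sum_(b <- w) (if b then q.+1 else q))%N.

Definition homog (p q : nat) (N : nat) (a : T p) : Prop :=
  forall w, a w != 0 -> wdeg q w = N.

Definition tzero (p : nat) : T p := fun _ => 0.
Definition tadd (p : nat) (a b : T p) : T p := fun w => a w + b w.
Definition tscale (p : nat) (c : 'F_p) (a : T p) : T p := fun w => c * a w.

Definition genx (p : nat) : T p := fun w => if w == [:: true] then 1 else 0.
Definition geny (p : nat) : T p := fun w => if w == [:: false] then 1 else 0.

(* graded commutator, extended bilinearly: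
   [a,b] = sum over homogeneous parts of a_m b_n - (-1)^{mn} b_n a_m *)
Definition tbracket (p q : nat) (a b : T p) : T p := fun w =>
  \sum_(i < (size w).+1)
     (a (take i w) * b (drop i w)
      - (-1) ^+ (wdeg q (take i w) * wdeg q (drop i w)) * b (take i w) * a (drop i w)).

(* the differential: the derivation of degree -1 with d x = y, d y = 0,
   d(uv) = (du) v + (-1)^{|u|} u (dv) *)
Definition tdiff (p q : nat) (a : T p) : T p := fun w =>
  \sum_(i < size w | nth true w i == false)
     (-1) ^+ (wdeg q (take i w)) * a (set_nth true w i true).

Inductive inL (p q : nat) : T p -> Prop :=
| inL_x : inL q (genx p)
| inL_y : inL q (geny p)
| inL_add a b : inL q a -> inL q b -> inL q (tadd a b)
| inL_scale c a : inL q a -> inL q (tscale c a)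
| inL_bracket a b : inL q a -> inL q b -> inL q (tbracket q a b)
| inL_ext a b : inL q a -> a =1 b -> inL q b.

Definition lincomb (p n : nat) (c : 'I_n -> 'F_p) (v : 'I_n -> T p) : T p :=
  fun w => \sum_(i < n) c i * v i w.

Definition linindep (p n : nat) (v : 'I_n -> T p) : Prop :=
  forall c : 'I_n -> 'F_p, lincomb c v =1 tzero p -> forall i, c i = 0.

Definition family_indep (p : nat) (Idx : Type) (f : Idx -> T p) : Prop :=
  forall n (s : 'I_n -> Idx), injective s -> linindep (fun i => f (s i)).

Definition in_span (p : nat) (Idx : Type) (f : Idx -> T p) (v : T p) : Prop :=
  exists n (s : 'I_n -> Idx) (c : 'I_n -> 'F_p), v =1 lincomb c (fun i => f (s i)).

Definition adpow (p q : nat) (n : nat) (u v : T p) : T p := iter n (tbracket q u) v.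

Definition sigmak (p q : nat) (k : nat) (u : T p) : T p := fun w =>
  (2%:R)^-1 * \sum_(1 <= j < (p ^ k).-1.+1)
     ((('C(p ^ k, j) %/ p)%N)%:R *
      tbracket q (adpow q j.-1 u (tdiff q u))
                 (adpow q ((p ^ k).-1 - j) u (tdiff q u)) w).

Definition in_sigma (p q : nat) (I : Type) (xa : I -> T p) (v : T p) : Prop :=
  in_span (fun ak : I * {k : nat | (1 <= k)%N} => sigmak q (sval ak.2) (xa ak.1)) v.

Definition dim_le (p : nat) (R : realType) (V : T p -> Prop) (B : R) : Prop :=
  forall n (v : 'I_n -> T p), (forall i, V (v i)) -> linindep v -> n%:R <= B.

Definition fam4 (p : nat) (I J : Type) (xa ya : I -> T p) (zb wb : J -> T p)
  (i : (I + I) + (J + J)) : T p :=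
  match i with
  | inl (inl a) => xa a | inl (inr a) => ya a
  | inr (inl b) => zb b | inr (inr b) => wb b end.

(* Main.v *)
Require Import Defs.
From mathcomp Require Import all_boot all_order all_algebra.
From mathcomp Require Import boolp reals exp.
From mathcomp Require Import zify ring lra.
Import Order.TTheory GRing.Theory Num.Theory.
Local Open Scope ring_scope.
Set Implicit Arguments. Unset Strict Implicit.

Section Hom.
Variables (p q : nat).

Lemma wdeg_nil : wdeg q [::] = 0%N.
Proof. by rewrite /wdeg big_nil. Qed.
Lemma wdeg_cons b w : wdeg q (b :: w) = ((if b then q.+1 else q) + wdeg q w)%N.
Proof. by rewrite /wdeg big_cons. Qed.
Lemma wdeg_cat w1 w2 : wdeg q (w1 ++ w2) = (wdeg q w1 + wdeg q w2)%N.
Proof. by rewrite /wdeg big_cat. Qed.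
Lemma wdeg_set w i : (i < size w)%N -> nth true w i = false ->
  wdeg q (set_nth true w i true) = (wdeg q w).+1.
Proof.
elim: w i => [|b w IH] [|i] //=.
- by move=> _ ->; rewrite !wdeg_cons.
- by move=> hi hn; rewrite !wdeg_cons IH // addnS.
Qed.

Definition homd (s D : nat) (a : T p) := forall w, a w != 0 -> (wdeg q w + s = D)%N.

Lemma sum_neq0 (I : eqType) (r : seq I) (P : pred I) (F : I -> 'F_p) :
  \sum_(i <- r | P i) F i != 0 -> exists i, [/\ i \in r, P i & F i != 0].
Proof.
move=> h; apply/not_existsP => hn; move/eqP: h; apply.
rewrite big_seq_cond big1 // => i /andP[ir Pi].
by case: (eqVneq (F i) 0) => // hF; exfalso; apply: (hn i); split.
Qed.

Lemma hom_tdiff s D a : homd s D a -> homd s.+1 D (tdiff q a).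
Proof.
move=> ha w /sum_neq0 [i [_ /eqP hi hF]].
have hF' : a (set_nth true w i true) != 0.
  by apply: contra hF => /eqP ->; rewrite mulr0.
by have := ha _ hF'; rewrite wdeg_set // addnS.
Qed.

Lemma hom_bracket s1 D1 s2 D2 a b : homd s1 D1 a -> homd s2 D2 b ->
  homd (s1 + s2) (D1 + D2) (tbracket q a b).
Proof.
move=> ha hb w /sum_neq0 [i [_ _ hF]].
have e : wdeg q w = (wdeg q (take i w) + wdeg q (drop i w))%N
  by rewrite -wdeg_cat cat_take_drop.
have [h1|h1] : (a (take i w) * b (drop i w) != 0) \/
   ((-1) ^+ (wdeg q (take i w) * wdeg q (drop i w)) * b (take i w) * a (drop i w) != 0).
  case: (eqVneq (a (take i w) * b (drop i w)) 0) => h; last by left.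
  by right; apply: contra hF => /eqP h'; rewrite h h' subr0.
- have ha1 : a (take i w) != 0 by apply: contra h1 => /eqP ->; rewrite mul0r.
  have hb1 : b (drop i w) != 0 by apply: contra h1 => /eqP ->; rewrite mulr0.
  have := ha _ ha1; have := hb _ hb1; lia.
- have ha1 : a (drop i w) != 0 by apply: contra h1 => /eqP ->; rewrite mulr0.
  have hb1 : b (take i w) != 0 by apply: contra h1 => /eqP ->; rewrite mulr0 mul0r.
  have := ha _ ha1; have := hb _ hb1; lia.
Qed.

Lemma hom_adpow j s1 D1 s2 D2 u v : homd s1 D1 u -> homd s2 D2 v ->
  homd (j * s1 + s2) (j * D1 + D2) (adpow q j u v).
Proof.
move=> hu hv; elim: j => [|j IH] //=.
have := hom_bracket hu IH; rewrite !mulSn !addnA; exact.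
Qed.

Lemma hom_sigma k dx x : (1 <= k)%N -> homd 0 dx x -> homd 2 (p ^ k * dx) (sigmak q k x).
Proof.
move=> hk hx.
have hd := hom_tdiff hx.
move=> w h.
have h' : \sum_(1 <= j < (p ^ k).-1.+1)
     ((('C(p ^ k, j) %/ p)%N)%:R *
      tbracket q (adpow q j.-1 x (tdiff q x))
                 (adpow q ((p ^ k).-1 - j) x (tdiff q x)) w) != 0.
  by apply: contra h; rewrite /sigmak => /eqP ->; rewrite mulr0.
have [j [jr _ hj]] := sum_neq0 h'.
rewrite mem_index_iota in jr.
have hb : tbracket q (adpow q j.-1 x (tdiff q x))
   (adpow q ((p ^ k).-1 - j) x (tdiff q x)) w != 0.
  by apply: contra hj => /eqP ->; rewrite mulr0.
have := hom_bracket (hom_adpow (j:=j.-1) hx hd) (hom_adpow (j:=(p ^ k).-1 - j) hx hd) hb.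
move=> e.
have eP : (p ^ k = j.-1.+1 + ((p ^ k).-1 - j).+1)%N by lia.
rewrite eP mulnDl !mulSn; move: e; set a := (j.-1 * dx)%N; set b := (((p ^ k).-1 - j) * dx)%N; lia.
Qed.
End Hom.

Section LA.
Variable p : nat.

Lemma LA n m (v : 'I_n -> T p) (u : 'I_m -> T p) :
  linindep v -> (forall i, exists c, v i =1 lincomb c u) -> (n <= m)%N.
Proof.
move=> hind hsp.
pose C i := projT1 (cid (hsp i)).
have hC i : v i =1 lincomb (C i) u := projT2 (cid (hsp i)).
rewrite leqNgt; apply/negP => hmn.
pose Cm : 'M['F_p]_(n, m) := \matrix_(i, j) C i j.
pose K := kermx Cm.
have hK : K != 0.
  rewrite -mxrank_eq0 mxrank_ker; have := rank_leq_col Cm; lia.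
have [i [j hij]] : exists i j, K i j != 0.
  case: (pselect (exists i j, K i j != 0)) => // hn.
  move/eqP: hK; case; apply/matrixP => a b.
  rewrite [X in _ = X]mxE; apply/eqP/negPn/negP => hab.
  by apply: hn; exists a, b.
have hKC : K *m Cm = 0 by apply: mulmx_ker.
suff hz : lincomb (fun k => K i k) v =1 tzero p.
  by move/eqP: (hind _ hz j); rewrite (negbTE hij).
move=> w; rewrite /lincomb /tzero.
under eq_bigr => k _ do rewrite hC /lincomb big_distrr /=.
rewrite exchange_big /= big1 // => l _.
move/matrixP: hKC => /(_ i l); rewrite !mxE => e.
apply: (@eq_trans _ _ ((\sum_(k < n) K i k * Cm k l) * u l w)); last by rewrite e mul0r.
rewrite big_distrl /=.
by apply: eq_bigr => k _; rewrite /Cm mxE mulrA.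
Qed.

Lemma sum_pred1_uniq (X : eqType) (U : seq X) (a : X) (f : X -> 'F_p) :
  uniq U -> \sum_(b <- U | a == b) f b = if a \in U then f a else 0.
Proof.
elim: U => [|b U IH] /=; first by rewrite big_nil.
move=> /andP[bU uU]; rewrite big_cons IH // in_cons.
case: (eqVneq a b) => [->|ab] /=; last by rewrite ?add0r.
by rewrite (negbTE bU) addr0.
Qed.
End LA.

Section Words.
Variable q : nat.
Lemma wdeg_cons' b w : wdeg q (b :: w) = ((if b then q.+1 else q) + wdeg q w)%N.
Proof. by rewrite /wdeg big_cons. Qed.

Fixpoint wl (f m : nat) : seq word :=
  if m == 0%N then [:: [::]] else
  match f with 0%N => [::] | f'.+1 =>
   (if (q.+1 <= m)%N then [seq true :: w | w <- wl f' (m - q.+1)] else [::]) ++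
   (if (q <= m)%N then [seq false :: w | w <- wl f' (m - q)] else [::]) end.

Lemma wl_complete : (1 <= q)%N -> forall w f, (size w <= f)%N -> w \in wl f (wdeg q w).
Proof.
move=> hq; elim=> [|b w IH] f /=.
  by rewrite /wdeg big_nil; case: f.
case: f => // f hs; rewrite wdeg_cons' /=.
have -> : ((if b then q.+1 else q) + wdeg q w == 0)%N = false by case: b; lia.
rewrite mem_cat; case: b.
- rewrite (_ : (q.+1 <= _)%N) ?addKn //; last by lia.
  by rewrite map_f ?IH.
- rewrite (_ : (q <= _)%N) ?addKn //; last by lia.
  by rewrite map_f ?IH ?orbT.
Qed.

Lemma wl_size (R : realType) (phi : R) : 1 <= phi -> phi ^+ q.+1 = phi + 1 ->
  forall f m, (size (wl f m))%:R <= phi ^+ m.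
Proof.
move=> h1 hphi; elim=> [|f IH] m /=.
  case: eqP => [->|_] /=; first by rewrite expr0.
  by rewrite exprn_ge0 // (le_trans ler01 h1).
case: eqP => [->|hm] /=; first by rewrite expr0.
rewrite size_cat natrD.
case: (leqP q.+1 m) => h.
- rewrite (_ : (q <= m)%N) ?size_map; last by lia.
  apply: (le_trans (lerD (IH (m - q.+1)%N) (IH (m - q)%N))).
  have e1 : (m - q = (m - q.+1).+1)%N by lia.
  have e2 : m = ((m - q.+1) + q.+1)%N by lia.
  by rewrite e1 [in X in _ <= X]e2 exprD hphi exprS; rewrite le_eqVlt; apply/orP; left; apply/eqP; ring.
- case: (leqP q m) => h' /=; rewrite ?add0r ?size_map.
  + have -> : (m - q = 0)%N by lia.
    by apply: (le_trans (IH 0%N)); rewrite expr0 exprn_ege1.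
  + by rewrite exprn_ge0 // (le_trans ler01 h1).
Qed.
End Words.

Section Misc.
Variable p q : nat.
Lemma size_le_wdeg w : (1 <= q)%N -> (size w <= wdeg q w)%N.
Proof.
move=> hq; elim: w => [|b w IH] //=; rewrite /wdeg big_cons -/(wdeg q w).
case: b; lia.
Qed.

Lemma sum_tnth_pred1 (X : eqType) (U : seq X) (a : X) (y : 'F_p) : uniq U ->
  \sum_(j < size U) (if a == tnth (in_tuple U) j then y else 0) = if a \in U then y else 0.
Proof.
move=> uU; rewrite -big_mkcond.
have := big_tnth 0 +%R U (fun b => a == b) (fun _ => y); rewrite /= => <-.
elim: U uU => [|b U IH] /=; first by rewrite big_nil.
move=> /andP[bU uU]; rewrite big_cons IH // in_cons.
case: (eqVneq a b) => [->|ab] /=; last by rewrite ?add0r.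
by rewrite (negbTE bU) addr0.
Qed.

Lemma span_seq (X : Type) (f : X -> T p) v : in_span f v ->
  exists l : seq ('F_p * X), forall w, v w = \sum_(x <- l) x.1 * f x.2 w.
Proof.
move=> [n [s [c h]]]; exists [seq (c j, s j) | j <- index_enum 'I_n] => w.
by rewrite h /lincomb big_map.
Qed.

Lemma size_flatten_le (R : realType) (ms : seq nat) (f : nat -> seq word) (B : R) :
  (forall m, m \in ms -> (size (f m))%:R <= B) ->
  (size (flatten (map f ms)))%:R <= (size ms)%:R * B.
Proof.
elim: ms => [|m ms IH] h /=; first by rewrite mul0r.
rewrite size_cat natrD mulrSr addrC ?mulrDl ?mul1r; apply: lerD.
  by apply: IH => m' hm'; apply: h; rewrite in_cons hm' orbT.
by apply: h; rewrite in_cons eqxx.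
Qed.
End Misc.

Unset Implicit Arguments. Set Strict Implicit.

Theorem mainTheorem14
  (p q : nat) (hp : prime p) (hp_odd : odd p) (hq : (1 <= q)%N)
  (* decomposition L = H (+) K *)
  (H : T p -> Prop)
  (hH0 : H (tzero p))
  (hHadd : forall a b, H a -> H b -> H (tadd a b))
  (hHscale : forall c a, H a -> H (tscale c a))
  (hHext : forall a b, H a -> a =1 b -> H b)
  (hHL : forall a, H a -> inL q a)
  (* basis {x_a, y_a, z_b, w_b} of K *)
  (I J : Type) (xa ya : I -> T p) (zb wb : J -> T p)
  (degx : I -> nat) (degz : J -> nat)
  (hxdeg : forall a, homog q (degx a) (xa a) /\ ~~ odd (degx a))
  (hydeg : forall a, homog q (degx a).-1 (ya a))
  (hzdeg : forall b, homog q (degz b) (zb b) /\ odd (degz b))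
  (hwdeg : forall b, homog q (degz b).-1 (wb b))
  (hdx : forall a, tdiff q (xa a) =1 ya a)
  (hdz : forall b, tdiff q (zb b) =1 wb b)
  (hbasisL : forall i : (I + I) + (J + J),
      inL q (fam4 xa ya zb wb i))
  (hbasis_indep : family_indep (fam4 xa ya zb wb))
  (hdecomp : forall l, inL q l -> exists h k, H h /\
      in_span (fam4 xa ya zb wb) k /\
      l =1 tadd h k)
  (hdirect : forall v, H v ->
      in_span (fam4 xa ya zb wb) v ->
      v =1 tzero p)
  (* phi: the positive real root of z^(q+1) - z - 1 *)
  (R : realType) (phi : R) (hphi0 : 0 < phi)
  (hphi : phi ^+ q.+1 - phi - 1 = 0) :
  forall N : nat, (0 < N)%N ->
    dim_le (fun v => in_sigma q xa v /\ homog q N v)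
      ((2 * (q.+2)%:R * powR phi (2 / p%:R)) * N%:R * powR phi (N%:R / p%:R)).
Proof.
move=> N hN n v hv hind.
have hp3 : (3 <= p)%N.
  have p2 : p != 2%N by apply/negP => /eqP e; move: hp_odd; rewrite e.
  have := prime_gt1 hp; move: p2; lia.
have phi1 : 1 <= phi.
  rewrite leNgt; apply/negP => h.
  have : phi ^+ q.+1 <= phi.
    by rewrite exprS ler_piMr // ?exprn_ile1 ?ltW.
  lra.
have hphi' : phi ^+ q.+1 = phi + 1 by lra.
pose X := {classic (I * {k : nat | (1 <= k)%N})}.
pose g (a : X) : T p := fun w => if wdeg q w == N then sigmak q (sval a.2) (xa a.1) w else 0.
pose Prel (a : X) : bool := (p ^ sval a.2 * degx a.1 == N.+2)%N.
have homx a : homd q 0 (degx a) (xa a).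
  by move=> w hw; rewrite addn0; apply: (hxdeg a).1.
have gz a w : ~~ Prel a -> g a w = 0.
  move=> hP; rewrite /g; case: eqP => // hw.
  case: (eqVneq (sigmak q (sval a.2) (xa a.1) w) 0) => // hs.
  have e := hom_sigma (svalP a.2) (homx a.1) hs.
  by move/negP: hP; case; rewrite /Prel -e hw addn2.
have ex i : exists l : seq ('F_p * X), forall w, v i w = \sum_(x <- l) x.1 * g x.2 w.
  have [l hl] := span_seq (X := X) (hv i).1.
  exists l => w; rewrite /g.
  case: eqP => hw.
    by rewrite hl; apply: eq_bigr.
  rewrite big1 => [|x _]; last by rewrite mulr0.
  case: (eqVneq (v i w) 0) => // hvw.
  by have := (hv i).2 w; rewrite hvw => /(_ isT).
pose lf i := projT1 (cid (ex i)).
have hlf i w : v i w = \sum_(x <- lf i) x.1 * g x.2 w := projT2 (cid (ex i)) w.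
pose U : seq X := undup [seq a <- map snd (flatten [seq lf i | i <- enum 'I_n]) | Prel a].
have uU : uniq U := undup_uniq _.
have inU i x : x \in lf i -> Prel x.2 -> x.2 \in U.
  move=> hx hP; rewrite mem_undup mem_filter hP /=; apply: map_f.
  by apply/flattenP; exists (lf i) => //; apply: map_f; rewrite mem_enum.
have hPU a : a \in U -> Prel a by rewrite mem_undup mem_filter => /andP[].
pose tU := tnth (in_tuple U).
pose u (j : 'I_(size U)) : T p := g (tU j).
have span_v i : exists c, v i =1 lincomb c u.
  exists (fun j => \sum_(x <- lf i | x.2 == tU j) x.1) => w.
  rewrite hlf /lincomb.
  under [RHS]eq_bigr => j _ do rewrite big_distrl /=.
  under [RHS]eq_bigr => j _.
    rewrite (eq_bigr (fun x => x.1 * g x.2 w)); last by move=> x /eqP ->.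
    rewrite big_mkcond /=.
  over.
  rewrite exchange_big /=; apply: eq_big_seq => x hx.
  rewrite (sum_tnth_pred1 _ _ uU).
  case: ifP => // hxU.
  case: (boolP (Prel x.2)) => hP; first by rewrite (inU _ _ hx hP) in hxU.
  by rewrite gz // mulr0.
have hnU : (n <= size U)%N := LA hind span_v.
have hp1 : (1 < p)%N by lia.
have Pfacts a : Prel a -> [/\ (0 < degx a.1)%N, (sval a.2 < N.+3)%N,
     (1 <= degx a.1 <= N)%N & (p * degx a.1 <= N.+2)%N].
  rewrite /Prel => /eqP Pa.
  have hk := svalP a.2; set k := sval a.2 in Pa hk *.
  have dpos : (0 < degx a.1)%N.
    by case: (posnP (degx a.1)) => h //; rewrite h muln0 in Pa.
  have h1 : (p <= p ^ k)%N by rewrite -{1}(expn1 p) leq_pexp2l ?(ltnW hp1).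
  have h2 : (k < p ^ k)%N by apply: ltn_expl.
  have h3 : (p ^ k <= p ^ k * degx a.1)%N by rewrite leq_pmulr.
  have h4 : (p * degx a.1 <= p ^ k * degx a.1)%N by rewrite leq_mul2r h1 orbT.
  split => //; lia.
pose CI := {classic I}.
pose al : seq CI := [seq (a.1 : CI) | a : X <- U].
have ual : uniq al.
  rewrite map_inj_in_uniq; first exact: uU.
  move=> a b ha hb /= e.
  have Pa := hPU a ha; have Pb := hPU b hb.
  have [dpos _ _ _] := Pfacts a Pa.
  move: Pa Pb; rewrite /Prel -e => /eqP Pa /eqP Pb.
  have ek : sval a.2 = sval b.2.
    apply: (expnI hp1); apply/eqP; rewrite -(eqn_pmul2r dpos) Pa Pb //.
  move: e ek; clear -a b; case: a => a1 a2; case: b => b1 b2 /= -> ek.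
  by congr pair; apply: val_inj.
pose tal := tnth (in_tuple al).
have tinj : injective tal by apply/tuple_uniqP.
pose xs (j : 'I_(size al)) : T p := xa (tal j).
have ind_x : linindep xs.
  apply: (hbasis_indep (size al) (fun j : 'I_(size al) => (inl (inl (tal j : I)) : (I + I) + (J + J)))).


  by move=> j1 j2 [] /tinj.
pose Dm (m : nat) : bool := [exists k : 'I_N.+3, (0 < k)%N && (p ^ k * m == N.+2)%N].
pose Dl := [seq m <- iota 1 N | Dm m].
pose Wd := undup (flatten [seq wl q N m | m <- Dl]).
have uW : uniq Wd := undup_uniq _.
pose tW := tnth (in_tuple Wd).
pose e (jj : 'I_(size Wd)) : T p := fun w0 => (w0 == tW jj)%:R.
have degDl a : a \in U -> degx a.1 \in Dl.
  move=> ha; have Pa := hPU a ha; have [dpos hkN hdN _] := Pfacts a Pa.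
  rewrite mem_filter mem_iota; apply/andP; split; last by lia.
  apply/existsP; exists (Ordinal hkN) => /=.
  by move: Pa; rewrite /Prel => /eqP ->; rewrite eqxx andbT (svalP a.2).
have span_x j : exists c, xs j =1 lincomb c e.
  exists (fun jj => xs j (tW jj)) => w0; rewrite /lincomb /e.
  under eq_bigr => jj _ do rewrite mulr_natr mulrb.
  rewrite (eq_bigr (fun jj => if w0 == tW jj then xs j w0 else 0)); last first.
    by move=> jj _; case: eqP => [->|].
  rewrite (sum_tnth_pred1 _ _ uW); case: ifP => // hW.
  case: (eqVneq (xs j w0) 0) => // hx.
  have : tal j \in al by apply: mem_tnth.
  case/mapP => a ha ea.
  have hd : wdeg q w0 = degx a.1 by rewrite -ea; apply: (hxdeg _).1.
  have [_ _ hdN _] := Pfacts a (hPU a ha).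
  move/negP: hW; case; rewrite mem_undup; apply/flattenP.
  exists (wl q N (degx a.1)); first by apply: map_f; apply: degDl.
  rewrite -hd; apply: wl_complete => //.
  have := size_le_wdeg w0 hq; lia.
have hxW : (size al <= size Wd)%N := LA ind_x span_x.
have hal : size al = size U := size_map _ _.
have phi0 : 0 <= phi := ltW hphi0.
pose Y := powR phi ((N.+2)%:R / p%:R).
have Y0 : 0 <= Y := powR_ge0 _ _.
have hW : (size Wd)%:R <= N%:R * Y.
  apply: (le_trans (y := (size (flatten [seq wl q N m | m <- Dl]))%:R)).
    by rewrite ler_nat size_undup.
  apply: (le_trans (size_flatten_le (B := Y) _)).
    move=> m hm; apply: le_trans (wl_size phi1 hphi' N m) _.
    rewrite -powR_mulrn //; apply: ler_powR => //.
    rewrite ler_pdivlMr ?ltr0n ?(prime_gt0 hp) // -natrM ler_nat.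
    move: hm; rewrite mem_filter => /andP[/existsP[k /andP[hk /eqP ek]] _].
    rewrite -ek mulnC leq_mul2r; apply/orP; right.
    by rewrite -{1}(expn1 p) leq_pexp2l ?(ltnW hp1).
  rewrite ler_wpM2r // ler_nat size_filter.
  by apply: leq_trans (count_size _ _) _; rewrite size_iota.
have hn : n%:R <= N%:R * Y.
  apply: le_trans hW; rewrite ler_nat; rewrite -hal in hnU; lia.
have eY : Y = powR phi (2 / p%:R) * powR phi (N%:R / p%:R).
  rewrite /Y -powRD; last by rewrite (gt_eqF hphi0) implybT.
  by rewrite -mulrDl -addn2 natrD addrC.
apply: (le_trans hn); rewrite eY.
have -> : 2 * (q.+2)%:R * powR phi (2 / p%:R) * N%:R * powR phi (N%:R / p%:R)
   = 2 * (q.+2)%:R * (N%:R * (powR phi (2 / p%:R) * powR phi (N%:R / p%:R))) by ring.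
apply: ler_peMl.
  by rewrite mulr_ge0 ?mulr_ge0 ?powR_ge0.
rewrite -natrM ler1n; lia.
Qed.
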